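(* Let $Z_1,\ldots,Z_{n+1}$ be i.i.d. from an arbitrary distribution $\mathcal P$, let $V$ be a fixed score function and $\alpha\in(0,1)$. Let $\tilde\alpha=A(Z_1,\ldots,Z_n,X_{n+1})\in[0,1]$, where $A$ is a fixed deterministic rule (the same for every input, invariant under permutations of its first $n$ arguments) such that for every input, with $\bar v^*:=Q(\tilde\alpha;\hat{\mathcal F})$, $$v^*_{i1}:=Q\Big(\tilde\alpha;\sum_{j=1}^n p^H_{i,j}\delta_{V_j}+p^H_{i,n+1}\delta_{\bar v^*}\Big),\qquad v^*_{i2}:=Q\Big(\tilde\alpha;\sum_{j=1}^n p^H_{i,j}\delta_{V_j}+p^H_{i,n+1}\delta_{0}\Big),$$ either $\bar v^*=\infty$ or $$\text{(G2)}\qquad \frac{1}{n+1}\sum_{i=1}^n\mathbb 1\{V_i\le v^*_{i1}\}\ge\alpha\quad\text{and}\quad \frac{1}{n+1}\sum_{i=1}^n\mathbb 1\{V_i\le v^*_{i2}\}+\frac{1}{n+1}\ge\alpha.$$ Then $\mathbb P\{V_{n+1}\le Q(\tilde\alpha;\hat{\mathcal F})\}\ge\alpha$.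
   Context: Data: $Z_i=(X_i,Y_i)\in\mathbb R^p\times\mathbb R$, $i=1,\ldots,n+1$; $X=\{X_1,\ldots,X_{n+1}\}$ (unordered). A localizer is a function $H(x_1,x_2,X)\in[0,1]$ of $x_1,x_2\in\mathbb R^p$ and of the unordered set $X$, satisfying $H(x,x,X)=1$ for all $x$. Write $H_{i,j}=H(X_i,X_j,X)$ and $p^H_{i,j}=H_{i,j}/\sum_{k=1}^{n+1}H_{i,k}$. For a probability distribution $\mathcal F$ on $\mathbb R\cup\{\infty\}$ and $a\in[0,1]$, $Q(a;\mathcal F)=\inf\{t:\mathbb P_{T\sim\mathcal F}(T\le t)\ge a\}$; $\delta_v$ denotes the point mass at $v$. A fixed score function is a deterministic measurable $V:\mathbb R^p\times\mathbb R\to[0,\infty)$ not depending on the data; $V_i=V(Z_i)$. Define $\hat{\mathcal F}=\sum_{j=1}^{n}p^H_{n+1,j}\delta_{V_j}+p^H_{n+1,n+1}\delta_{\infty}$ (note that $\hat{\mathcal F}$, $\bar v^*$, $v^*_{i1}$, $v^*_{i2}$ do not depend on $Y_{n+1}$). *)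

(* Defs.v *)
From HB Require Import structures.
From mathcomp Require Import all_boot all_order all_algebra.
From mathcomp Require Import all_classical all_reals all_analysis.
Set Implicit Arguments. Unset Strict Implicit. Unset Printing Implicit Defensive.
Import Order.TTheory GRing.Theory Num.Theory.
Local Open Scope ring_scope.
Local Open Scope classical_set_scope.

Definition feat (R : realType) (p : nat) := (p.-tuple R)%type.
Definition dpt (R : realType) (p : nat) := (p.-tuple R * R)%type.

(* cdf at t of the discrete distribution sum_j w j * delta_(v j) on R u {oo} *)
Definition wcdf (R : realType) (m : nat) (w : 'I_m -> R) (v : 'I_m -> \bar R)
  (t : \bar R) : R := \sum_(j < m) (if (v j <= t)%E then w j else 0).

Definition quant (R : realType) (m : nat) (a : R) (w : 'I_m -> R)
  (v : 'I_m -> \bar R) : \bar R := ereal_inf [set t : \bar R | a <= wcdf w v t].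

Section ConformalDefs.
Variables (R : realType) (p n : nat).
Local Notation X := (feat R p).
Local Notation D := (dpt R p).

Definition is_localizer (H : X -> X -> (n.+1).-tuple X -> R) : Prop :=
  [/\ (forall x1 x2 t, 0 <= H x1 x2 t <= 1),
      (forall x t, H x x t = 1) &
      (forall x1 x2 (t t' : (n.+1).-tuple X), perm_eq t t' -> H x1 x2 t = H x1 x2 t')].

Definition is_symmetric_rule (A : n.-tuple D -> X -> R) : Prop :=
  (forall z x, 0 <= A z x <= 1) /\
  (forall (z z' : n.-tuple D) x, perm_eq z z' -> A z x = A z' x).

(* Data Z_1..Z_{n+1} are the entries of d; Z_{n+1} is at index ord_max. *)
Definition Xs (d : (n.+1).-tuple D) : (n.+1).-tuple X := map_tuple fst d.

Definition pH (H : X -> X -> (n.+1).-tuple X -> R) (d : (n.+1).-tuple D)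
  (i j : 'I_n.+1) : R :=
  H (tnth d i).1 (tnth d j).1 (Xs d) /
  \sum_(k < n.+1) H (tnth d i).1 (tnth d k).1 (Xs d).

Definition first_n (d : (n.+1).-tuple D) : n.-tuple D :=
  [tuple tnth d (widen_ord (leqnSn n) i) | i < n].

Definition atilde (A : n.-tuple D -> X -> R) (d : (n.+1).-tuple D) : R :=
  A (first_n d) (tnth d ord_max).1.

Definition Qi (H : X -> X -> (n.+1).-tuple X -> R) (V : D -> R) (a : R)
  (d : (n.+1).-tuple D) (i : 'I_n.+1) (c : \bar R) : \bar R :=
  quant a (pH H d i)
    (fun j => if j == ord_max then c else (V (tnth d j))%:E).

(* bar v* = Q(alpha~; F^) *)
Definition vbar H (A : n.-tuple D -> X -> R) V (d : (n.+1).-tuple D) : \bar R :=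
  Qi H V (atilde A d) d ord_max +oo%E.

Definition vstar1 H (A : n.-tuple D -> X -> R) V d (i : 'I_n.+1) : \bar R :=
  Qi H V (atilde A d) d i (vbar H A V d).

Definition vstar2 H (A : n.-tuple D -> X -> R) V d (i : 'I_n.+1) : \bar R :=
  Qi H V (atilde A d) d i 0%E.

Definition G2 (alpha : R) H (A : n.-tuple D -> X -> R) V (d : (n.+1).-tuple D)
  : Prop :=
  (alpha <= (n.+1)%:R^-1 *
     \sum_(i < n.+1 | i != ord_max) ((V (tnth d i))%:E <= vstar1 H A V d i)%E%:R)
  /\
  (alpha <= (n.+1)%:R^-1 *
     \sum_(i < n.+1 | i != ord_max) ((V (tnth d i))%:E <= vstar2 H A V d i)%E%:R
     + (n.+1)%:R^-1).

Definition iid {d0 : measure_display} {Omega : measurableType d0}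
  (P : probability Omega R) (Pz : probability D R)
  (Z : 'I_n.+1 -> Omega -> D) : Prop :=
  [/\ (forall i, measurable_fun setT (Z i)),
      (forall i (B : set D), measurable B -> P (Z i @^-1` B) = Pz B) &
      (forall B : 'I_n.+1 -> set D, (forall i, measurable (B i)) ->
         P (\bigcap_(i in [set: 'I_n.+1]) (Z i @^-1` B i))
         = (\prod_(i < n.+1) P (Z i @^-1` B i))%E)].

Definition data {T : Type} (Z : 'I_n.+1 -> T -> D) (w : T) : (n.+1).-tuple D :=
  [tuple Z i w | i < n.+1].

End ConformalDefs.

(* Main.v *)
Require Import Defs.
From HB Require Import structures.
From mathcomp Require Import all_boot all_order all_algebra all_fingroup.
From mathcomp Require Import all_classical all_reals all_analysis.
From mathcomp.algebra_tactics Require Import ring lra.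
From mathcomp Require Import measurable_realfun.
Import Order.TTheory GRing.Theory Num.Theory.
Local Open Scope ring_scope.
Local Open Scope classical_set_scope.
Set Implicit Arguments. Unset Strict Implicit.

Section Part1.
Variables (R : realType) (p n : nat).
Local Notation D := (dpt R p).
Variable V : D -> R.
Variable H : feat R p -> feat R p -> (n.+1).-tuple (feat R p) -> R.
Variable A : n.-tuple D -> feat R p -> R.
Hypothesis HL : is_localizer H.
Hypothesis V0 : forall v, 0 <= V v.

Lemma quant_ge (m : nat) (a : R) (w : 'I_m -> R) (v : 'I_m -> \bar R) (x : \bar R) :
  (x <= quant a w v)%E <-> (forall t, (t < x)%E -> wcdf w v t < a).
Proof.
split.
- move=> xq t tx; rewrite ltNge; apply/negP => at1.
  have : (quant a w v <= t)%E by apply: ereal_inf_lbound.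
  by move=> /(le_trans xq); rewrite leNgt tx.
- move=> h; apply: le_ereal_inf_tmp => y /= ay.
  rewrite leNgt; apply/negP => /h; by rewrite ltNge ay.
Qed.

Lemma pH_ge0 d i j : 0 <= pH H d i j.
Proof.
case: HL => H01 _ _; rewrite /pH divr_ge0 //.
  by have /andP[] := H01 (tnth d i).1 (tnth d j).1 (Xs d).
by apply: sumr_ge0 => k _; have /andP[] := H01 (tnth d i).1 (tnth d k).1 (Xs d).
Qed.

Definition sw (i : 'I_n.+1) (d : (n.+1).-tuple D) : (n.+1).-tuple D :=
  [tuple tnth d (tperm i ord_max j) | j < n.+1].

Lemma tnth_sw i d j : tnth (sw i d) j = tnth d (tperm i ord_max j).
Proof. by rewrite tnth_mktuple. Qed.

Lemma Xs_sw i d : perm_eq (Xs (sw i d)) (Xs d).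
Proof.
apply/tuple_permP; exists (tperm i ord_max).
congr val; apply: eq_from_tnth => j; rewrite /Xs tnth_map tnth_sw.
by rewrite tnth_mktuple tnth_map.
Qed.

Lemma pH_sw i d x y : pH H (sw i d) x y =
  pH H d (tperm i ord_max x) (tperm i ord_max y).
Proof.
case: HL => _ _ Hp; rewrite /pH !tnth_sw !(Hp _ _ _ _ (Xs_sw i d)).
congr (_ / _); rewrite [RHS](reindex_inj (@perm_inj _ (tperm i ord_max))) /=.
by apply: eq_bigr => k _; rewrite tnth_sw (Hp _ _ _ _ (Xs_sw i d)).
Qed.

Definition G d j i c t : R :=
  \sum_(l < n.+1) (if ((if l == i then c else (V (tnth d l))%:E) <= t)%E
                   then pH H d j l else 0).

Definition W d j t : R :=
  \sum_(l < n.+1) (if ((V (tnth d l))%:E <= t)%E then pH H d j l else 0).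

Lemma wcdf_sw i d x c t :
  wcdf (pH H (sw i d) x)
    (fun l => if l == ord_max then c else (V (tnth (sw i d) l))%:E) t
  = G d (tperm i ord_max x) i c t.
Proof.
rewrite /wcdf /G (reindex_inj (@perm_inj _ (tperm i ord_max))) /=.
apply: eq_bigr => l _; rewrite pH_sw tpermK tnth_sw tpermK.
have -> : (tperm i ord_max l == ord_max) = (l == i).
  by rewrite (can2_eq (tpermK i ord_max) (tpermK i ord_max)) tpermR.
by [].
Qed.

Lemma W_le_G d j i c t : (c <= (V (tnth d i))%:E)%E -> W d j t <= G d j i c t.
Proof.
move=> ci; apply: ler_sum => l _.
case: eqP => [->|_]; last by [].
case: ifP => // vt; first by rewrite (le_trans ci vt).
by case: ifP => _ //; apply: pH_ge0.
Qed.

Lemma G_oo d j i t : (t < (V (tnth d i))%:E)%E -> G d j i +oo%E t = W d j t.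
Proof.
move=> ti; apply: eq_bigr => l _; case: eqP => [->|//].
have -> : (+oo <= t)%E = false by apply/negbTE; rewrite -ltNge (lt_trans ti) ?ltey.
by rewrite leNgt ti.
Qed.

Definition Pd d j (a : R) := forall t, (t < (V (tnth d j))%:E)%E -> W d j t < a.

Lemma Pd_mono d j a b : a <= b -> Pd d j a -> Pd d j b.
Proof. by move=> ab h t /h /lt_le_trans; apply. Qed.

Lemma cov_sw i d a :
  ((V (tnth (sw i d) ord_max))%:E <= Qi H V a (sw i d) ord_max +oo%E)%E <-> Pd d i a.
Proof.
rewrite /Qi quant_ge tnth_sw tpermR; split => h t ti.
  by rewrite -(G_oo i ti) -[X in G _ X _ _ _](tpermR i ord_max) -wcdf_sw h.
by rewrite wcdf_sw tpermR G_oo //; apply: h.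
Qed.

Lemma vstar_sw i d a x c : x != ord_max -> (c <= (V (tnth d i))%:E)%E ->
  ((V (tnth (sw i d) x))%:E <= Qi H V a (sw i d) x c)%E ->
  Pd d (tperm i ord_max x) a.
Proof.
move=> _ ci; rewrite /Qi quant_ge tnth_sw => h t /h.
by rewrite wcdf_sw; apply: le_lt_trans; apply: W_le_G.
Qed.


Variable alpha : R.
Hypothesis alpha1 : alpha <= 1.

Lemma key d i : G2 alpha H A V (sw i d) ->
  alpha * (n.+1)%:R <= \sum_(j < n.+1) (`[< Pd d j (atilde A (sw i d)) >] : bool)%:R.
Proof.
set a := atilde A (sw i d); set e := sw i d; set k : R := (n.+1)%:R.
have k0 : 0 < k by rewrite ltr0n.
have step : forall c : \bar R, (c <= (V (tnth d i))%:E)%E ->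
  \sum_(x < n.+1 | x != ord_max) ((V (tnth e x))%:E <= Qi H V a e x c)%E%:R
  <= \sum_(j < n.+1 | j != i) (`[< Pd d j a >] : bool)%:R :> R.
  move=> c ci; rewrite (reindex_inj (@perm_inj _ (tperm i ord_max))) /=.
  have eqP' : forall j, (tperm i ord_max j != ord_max) = (j != i).
    by move=> j; rewrite (can2_eq (tpermK i ord_max) (tpermK i ord_max)) tpermR.
  rewrite (eq_bigl (fun j => j != i)); last by move=> j; rewrite eqP'.
  apply: ler_sum => j ji; case hv: (_ <= _)%E; last by rewrite ler0n.
  have hj : tperm i ord_max j != ord_max by rewrite eqP'.
  have h := @vstar_sw i d a (tperm i ord_max j) c hj ci hv.
  by rewrite tpermK in h; rewrite asboolT.
rewrite (bigD1 i) //=; move=> [g1 g2].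
case: (pselect (Pd d i a)) => hPi.
- rewrite asboolT //.
  have := step 0%E; rewrite lee_fin V0 => /(_ isT) st.
  have : alpha * k <= ((n.+1)%:R^-1 * \sum_(x < n.+1 | x != ord_max)
     ((V (tnth e x))%:E <= vstar2 H A V e x)%E%:R + (n.+1)%:R^-1) * k.
    by rewrite ler_wpM2r // ltW.
  move=> /le_trans; apply.
  have -> : forall S : R, ((n.+1)%:R^-1 * S + (n.+1)%:R^-1) * k = S + 1.
    by move=> S; rewrite /k; field.
  by rewrite addrC; apply: lerD => //; exact: st.
- rewrite asboolF // add0r.
  have cv : (vbar H A V e <= (V (tnth d i))%:E)%E.
    rewrite leNgt; apply/negP => /ltW h; apply: hPi; apply/(cov_sw _ _ _).1.
    by rewrite tnth_sw tpermR.
  have := step _ cv => st.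
  have : alpha * k <= ((n.+1)%:R^-1 * \sum_(x < n.+1 | x != ord_max)
     ((V (tnth e x))%:E <= vstar1 H A V e x)%E%:R) * k.
    by rewrite ler_wpM2r // ltW.
  move=> /le_trans; apply.
  have -> : forall S : R, ((n.+1)%:R^-1 * S) * k = S.
    by move=> S; rewrite /k; field.
  exact: st.
Qed.

Hypothesis hG : forall d, vbar H A V d = +oo%E \/ G2 alpha H A V d.

Lemma count d : alpha * (n.+1)%:R <=
  \sum_(i < n.+1) ((V (tnth (sw i d) ord_max))%:E <= vbar H A V (sw i d))%E%:R.
Proof.
case: (pselect (exists i, vbar H A V (sw i d) != +oo%E)) => [[i0 hi0] | hall].
  case: (@arg_minP _ _ _ i0 (fun i => vbar H A V (sw i d) != +oo%E) (fun i => atilde A (sw i d)) hi0) => m hm hmin.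
  have g2 : G2 alpha H A V (sw m d).
    by case: (hG (sw m d)) => // hoo; move: hm; rewrite hoo eqxx.
  apply: (le_trans (key g2)).
  apply: ler_sum => j _; case: (asboolP (Pd d j _)) => hP; last first.
    by case: (_ <= _)%E.
  have -> : ((V (tnth (sw j d) ord_max))%:E <= vbar H A V (sw j d))%E = true => //.
  have [->|hj] := eqVneq (vbar H A V (sw j d)) +oo%E; first by rewrite leey.
  apply/(cov_sw _ _ _).2; exact: Pd_mono (hmin j hj) hP.
- have hall' : forall i, vbar H A V (sw i d) = +oo%E.
    move=> i; apply/eqP; apply/negPn/negP => h; apply: hall; by exists i.
  under eq_bigr => i _ do rewrite hall' leey.
  rewrite sumr_const card_ord -[X in _ <= X]mul1r ler_wpM2r //.
Qed.

End Part1.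

Section Part2.
Variables (d : measure_display) (T : measurableType d) (m : nat).
Definition rect (B : 'I_m -> set T) : set (m.-tuple T) :=
  [set t | forall i, B i (tnth t i)].
Definition Gr : set (set (m.-tuple T)) :=
  [set X | exists2 B, (forall i, measurable (B i)) & X = rect B].

Lemma mG : @measurable _ (m.-tuple T) = <<s Gr >>.
Proof.
rewrite eqEsubset; split.
  apply: smallest_sub; first exact: smallest_sigma_algebra.
  apply: (big_ind (fun S => S `<=` <<s Gr >>)) => //.
    by move=> X Y hX hY; rewrite subUset.
  move=> i _ X [Ai mAi <-{X}]; apply: sub_sigma_algebra.
  exists (fun j => if j == i then Ai else setT).
    by move=> j; case: ifP.
  apply/seteqP; split => t /=.
    by move=> [_ hA] j; case: eqP => [->|].
  by move=> /(_ i); rewrite eqxx.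
apply: smallest_sub; first exact: sigma_algebra_measurable.
move=> X [B mB ->].
have -> : rect B = \bigcap_(i in [set: 'I_m]) ((tnth (T:=T))^~ i @^-1` B i).
  by apply/seteqP; split => t /= h i; [move=> _|]; apply: h.
apply: fin_bigcap_measurable; first exact: finite_finset.
by move=> i _; rewrite -[X in measurable X]setTI; apply: measurable_tnth.
Qed.

Lemma Gr_setI : setI_closed Gr.
Proof.
move=> X Y [B mB ->] [C mC ->]; exists (fun i => B i `&` C i).
  by move=> i; apply: measurableI.
by apply/seteqP; split => t /=; [move=> [h1 h2] i|move=> h; split => i; case: (h i)].
Qed.
End Part2.

Section Part3.
Variables (R : realType) (p n : nat) (d0 : measure_display) (Omega : measurableType d0).
Variables (P : probability Omega R) (Pz : probability (dpt R p) R).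
Local Notation D := (dpt R p).

Lemma mdata (Z : 'I_n.+1 -> Omega -> D) : (forall i, measurable_fun setT (Z i)) ->
  measurable_fun setT (data Z).
Proof.
move=> mZ; apply/measurable_fun_tnthP => i.
have -> : (tnth (T:=D))^~ i \o data Z = Z i.
  by apply/funext => w /=; rewrite tnth_mktuple.
exact: mZ.
Qed.

Lemma exch (Z : 'I_n.+1 -> Omega -> D) (s : 'S_n.+1) : iid P Pz Z ->
  forall S, measurable S ->
  P (data (fun j => Z (s j)) @^-1` S) = P (data Z @^-1` S).
Proof.
move=> [mZ lZ pZ].
have mZ' : forall i, measurable_fun setT (Z (s i)) by move=> i; exact: mZ.
have md := mdata mZ; have md' := mdata mZ'.
have mpre : forall (f : Omega -> (n.+1).-tuple D) S, measurable_fun setT f ->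
    measurable S -> measurable (f @^-1` S).
  by move=> f S mf mS; rewrite -[X in measurable X]setTI; apply: mf.
move=> S mS; rewrite (@mG _ D n.+1) in mS.
move: S mS; apply: (dynkin_induction (@mG _ D n.+1) (@Gr_setI _ D n.+1)).
- by rewrite !preimage_setT.
- move=> X [B mB ->].
  have e1 : data Z @^-1` rect B = \bigcap_(i in [set: 'I_n.+1]) (Z i @^-1` B i).
    by apply/seteqP; split => w /= h i; [move=> _|]; move: (h i); rewrite ?tnth_mktuple //; apply.
  have e2 : data (fun j => Z (s j)) @^-1` rect B =
      \bigcap_(i in [set: 'I_n.+1]) (Z i @^-1` B (s^-1%g i)).
    apply/seteqP; split => w /= h i.
      by move=> _; have := h (s^-1%g i); rewrite tnth_mktuple permKV.
    by rewrite tnth_mktuple; have := h (s i) I; rewrite permK.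
  rewrite e1 e2 !pZ //.
  under eq_bigr => i _ do rewrite lZ //.
  under [RHS]eq_bigr => i _ do rewrite lZ //.
  by rewrite [LHS](reindex_inj (@perm_inj _ s)) /=; apply: eq_bigr => i _; rewrite permK.
- move=> S mS h; rewrite -!preimage_setC !probability_setC ?h //; exact: mpre.
- move=> F mF tF hF; rewrite !preimage_bigcup.
  have tr : forall f : Omega -> (n.+1).-tuple D, trivIset setT (fun k => f @^-1` F k).
    move=> f; apply/trivIsetP => i j _ _ ij; rewrite -preimage_setI.
    by move/trivIsetP : tF => /(_ _ _ I I ij) ->; rewrite preimage_set0.
  rewrite !measure_bigcup //; first by apply: eq_eseriesr => i _; exact: hF.
  + by move=> i _; apply: mpre.
  + by move=> i _; apply: mpre.
Qed.

End Part3.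

Theorem theorem1 (R : realType) (p n : nat)
  (d0 : measure_display) (Omega : measurableType d0)
  (P : probability Omega R) (Pz : probability (dpt R p) R)
  (Z : 'I_n.+1 -> Omega -> dpt R p)
  (V : dpt R p -> R)
  (H : feat R p -> feat R p -> (n.+1).-tuple (feat R p) -> R)
  (A : n.-tuple (dpt R p) -> feat R p -> R)
  (alpha : R) :
  iid P Pz Z ->
  measurable_fun setT V ->
  (forall v, 0 <= V v) ->
  is_localizer H ->
  is_symmetric_rule A ->
  0 < alpha < 1 ->
  (forall d : (n.+1).-tuple (dpt R p),
     vbar H A V d = +oo%E \/ G2 alpha H A V d) ->
  (* regularity: the coverage event is an event of the data space *)
  measurable [set d : (n.+1).-tuple (dpt R p) |
               ((V (tnth d ord_max))%:E <= vbar H A V d)%E] ->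
  (alpha%:E <= P [set w | ((V (Z ord_max w))%:E <= vbar H A V (data Z w))%E])%E.
Proof.
move=> hiid mV V0 HL hA /andP[a0 a1] hG mC.
set C := [set d : (n.+1).-tuple (dpt R p) | _] in mC *.
have mZ : forall i, measurable_fun setT (Z i) by case: hiid.
have hsw : forall i w, data (fun j => Z (tperm i ord_max j)) w = sw i (data Z w).
  by move=> i w; apply: eq_from_tnth => j; rewrite !tnth_mktuple.
pose E i := data (fun j => Z (tperm i ord_max j)) @^-1` C.
have mE : forall i, measurable (E i).
  move=> i; rewrite /E -[X in measurable X]setTI; apply: (mdata (Z := fun j => Z (tperm i ord_max j))) => //.
have PE : forall i, P (E i) = P (data Z @^-1` C).
  by move=> i; rewrite /E (exch (tperm i ord_max) hiid mC).
have -> : [set w | ((V (Z ord_max w))%:E <= vbar H A V (data Z w))%E] = data Z @^-1` C.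
  by apply/seteqP; split => w; rewrite /C /= tnth_mktuple.
have pt : forall w, ((alpha * (n.+1)%:R)%:E <= \sum_(i < n.+1) (\1_(E i) w)%:E)%E.
  move=> w; rewrite sumEFin lee_fin.
  apply: le_trans (count HL V0 (ltW a1) hG (data Z w)) _.
  apply: ler_sum => i _; rewrite indicE.
  case h: ((V (tnth (sw i (data Z w)) ord_max))%:E <= vbar H A V (sw i (data Z w)))%E.
    by rewrite mem_set // /E /= hsw /C /= h.
  by rewrite ler0n.
have I1 : (\int[P]_(w in setT) (\sum_(i < n.+1) (\1_(E i) w)%:E) =
           \sum_(i < n.+1) P (E i))%E.
  rewrite ge0_integral_sum //; first by apply: eq_bigr => i _; rewrite integral_indic // setIT.
  all: try by move=> i; apply/measurable_EFinP; apply: measurable_indic.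
  all: try by move=> i w _; rewrite lee_fin indicE ler0n.
have I2 : (\int[P]_(w in setT) (cst (alpha * (n.+1)%:R)%:E) w =
           (alpha * (n.+1)%:R)%:E)%E.
  rewrite integral_cst //.
  set Q := (X in (_ * X)%E).
  have -> : Q = 1%E by rewrite /Q; exact: probability_setT.
  by rewrite mule1.
have : ((alpha * (n.+1)%:R)%:E <= \sum_(i < n.+1) P (E i))%E.
  rewrite -I2 -I1; apply: ge0_le_integral => //.
  - by move=> w _; rewrite lee_fin mulr_ge0 // ltW.
  - apply: emeasurable_sum => i; apply/measurable_EFinP; apply: measurable_indic.
    exact: mE.
under eq_bigr => i _ do rewrite PE.
have mS : measurable (data Z @^-1` C).
  by rewrite -[X in measurable X]setTI; apply: (mdata mZ).
move: (probability_le1 P mS) (measure_ge0 P (data Z @^-1` C)).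
case: (P (data Z @^-1` C)) => [r _ _|//|]; last first.
  move=> _ _; rewrite sumr_const card_ord.
  by rewrite (enatmul_ninfty (R:=R) n : ((-oo%E : \bar R) *+ n.+1)%R = -oo%E) leeNy_eq.
rewrite sumEFin lee_fin sumr_const card_ord => h.
have k0 : 0 < (n.+1)%:R :> R by rewrite ltr0n.
rewrite lee_fin -(ler_pM2r k0); apply: (le_trans h).
by rewrite mulr_natr.
Qed.
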